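(* Let $G$ be a finite simple graph, let $V_1\subset V(G)$ and $V_2 = V(G)\setminus V_1$ with both $V_1,V_2$ nonempty, and let $G_1=G(V_1)$. Write $V=V(G)$. Assume that $\max_{x,y\in V}\delta(x,y)\le 2$ (the contracted diameter of $V$ is at most $2$). Let $[S,\bar S]$ be an edge cut of $G$ with $V_2\subset S$, and let $k = \min_{x\in V_1}\deg_G(x)$. Assume $k > |[S,\bar S]|$. Then: 1. there exists $\bar s\in\bar S$ with $\delta(\bar s,S)=2$; 2. for every $s\in S$, $\delta(s,\bar S)=1$; 3. $|S\cap V_1| < |[S,\bar S]| < k < |\bar S|$; 4. $S\cap V_1\subset \partial^2 V_1$ and $\bar S\supset i^2 V_1$; 5. $\Phi\le |[S,\bar S]|$.
   Context: For $A,B\subset V(G)$, $[A,B]$ denotes the set of edges $ab$ of $G$ with $a\in A$, $b\in B$ (edges are unoriented, so $[A,B]=[B,A]$); $[v,A]$ means $[\{v\},A]$. $\deg_G(v)=|[v,V(G)]|$. For $A\subset V(G)$, $G(A)$ is the induced subgraph on $A$. $d_G(v,w)$ is the graph distance in $G$ and $d_G(v,A)=\min_{w\in A}d_G(v,w)$. An edge cut is a set $[S,\bar S]$ where $\emptyset\ne S\subsetneq V(G)$ and $\bar S=V(G)\setminus S$. Contracted distance: for $x,y\in V_1$, $\delta(x,y)=\min\{d_{G_1}(x,y),\, d_G(x,V_2)+d_G(y,V_2)\}$; for $x\in V$ and $y\in V_2$, $\delta(x,y)=\delta(y,x)=d_G(x,V_2)$. For $x\in V$ and $A\subset V$, $\delta(x,A)=\min_{a\in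 A}\delta(x,a)$. For $j\ge 1$: $\partial^j V_1=\{x\in V_1: |[x,V_2]|\ge j\}$ and $i^j V_1=\{x\in V_1: |[x,V_2]|<j\}$. $\Phi=\sum_{x\in V_1}\min\{\max\{1,|[x,i^2V_1]|\},\,|[x,V_2]|\}$. *)

(* Defs.v *)
(* A finite simple graph is a symmetric irreflexive relation
   e : rel T on a finite type T; V(G) = [set: T]. *)
From mathcomp Require Import all_boot.
Set Implicit Arguments. Unset Strict Implicit. Unset Printing Implicit Defensive.

Section Graph.
Variables (T : finType) (e : rel T).

(* reach A n x y : there is a walk of length exactly n from x to y
   all of whose vertices lie in A (i.e. a walk in the induced subgraph G(A)). *)
Fixpoint reach (A : {set T}) (n : nat) (x y : T) : bool :=
  match n with
  | 0 => (x \in A) && (x == y)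
  | n'.+1 => [exists z, [&& reach A n' x z, e z y & y \in A]]
  end.

(* Extended naturals: None = +infinity. *)
Definition omin (a b : option nat) : option nat :=
  match a, b with
  | None, _ => b
  | _, None => a
  | Some m, Some n => Some (minn m n)
  end.

Definition oadd (a b : option nat) : option nat :=
  match a, b with
  | Some m, Some n => Some (m + n)
  | _, _ => None
  end.

(* Graph distance in G(A); None if no path.  A shortest walk has fewer than
   #|T| edges, so searching lengths 0 .. #|T|-1 suffices. *)
Definition dist (A : {set T}) (x y : T) : option nat :=
  let n := find (fun n => reach A n x y) (iota 0 #|T|) in
  if n < #|T| then Some n else None.

Definition dG (x y : T) : option nat := dist setT x y.
Definition dGset (x : T) (B : {set T}) : option nat :=
  \big[omin/None]_(b in B) dG x b.

(* [A,B] as a set of oriented pairs (a,b) with a in A, b in B; for disjoint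
   A, B each unoriented edge is counted exactly once. *)
Definition edges_between (A B : {set T}) : {set T * T} :=
  [set p : T * T | [&& e p.1 p.2, p.1 \in A & p.2 \in B]].

Definition nbrs_in (v : T) (A : {set T}) : nat := #|[set y in A | e v y]|.

Definition deg (v : T) : nat := nbrs_in v setT.

Variable V1 : {set T}.
Definition V2 : {set T} := ~: V1.

Definition delta (x y : T) : option nat :=
  if y \in V2 then dGset x V2
  else if x \in V2 then dGset y V2
  else omin (dist V1 x y) (oadd (dGset x V2) (dGset y V2)).

Definition delta_set (x : T) (A : {set T}) : option nat :=
  \big[omin/None]_(a in A) delta x a.

Definition boundary (j : nat) : {set T} := [set x in V1 | j <= nbrs_in x V2].
Definition interior (j : nat) : {set T} := [set x in V1 | nbrs_in x V2 < j].

Definition Phi : nat :=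
  \sum_(x in V1) minn (maxn 1 (nbrs_in x (interior 2))) (nbrs_in x V2).

End Graph.

(* Main.v *)
Require Import Defs.
From mathcomp Require Import all_boot.
From Stdlib Require Import Lia.
Set Implicit Arguments. Unset Strict Implicit. Unset Printing Implicit Defensive.

Definition ole (a b : option nat) : bool :=
  match a, b with
  | _, None => true
  | None, Some _ => false
  | Some m, Some n => m <= n
  end.

Lemma ole_trans a b c : ole a b -> ole b c -> ole a c.
Proof. move: a b c => [a|] [b|] [c|] //= h1 h2; exact: leq_trans h1 h2. Qed.

Lemma omin_le_l a b : ole (omin a b) a.
Proof. move: a b => [a|] [b|] //=; rewrite ?geq_minl //; case: b => //=. Qed.

Lemma omin_le_r a b : ole (omin a b) b.
Proof. move: a b => [a|] [b|] //=; rewrite ?geq_minr //. Qed.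

Lemma omin_Some a b n : omin a b = Some n -> a = Some n \/ b = Some n.
Proof.
move: a b => [a|] [b|] //=; try by [left|right].
rewrite /minn; case: ifP => _ [->]; by [left|right].
Qed.

Lemma big_omin_le (I : eqType) (r : seq I) (P : pred I) (F : I -> option nat) i :
  i \in r -> P i -> ole (\big[omin/None]_(j <- r | P j) F j) (F i).
Proof.
elim: r => [|j r IH] //=. rewrite inE big_cons => /orP [/eqP -> | ir] Pi.
- by rewrite Pi omin_le_l.
- case: (P j); last exact: IH. exact: ole_trans (omin_le_r _ _) (IH ir Pi).
Qed.

Lemma big_omin_Some (I : eqType) (r : seq I) (P : pred I) (F : I -> option nat) n :
  \big[omin/None]_(j <- r | P j) F j = Some n -> exists i, [/\ i \in r, P i & F i = Some n].
Proof.
elim: r => [|j r IH]; first by rewrite big_nil.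
rewrite big_cons; case Pj: (P j).
- case/omin_Some => [h|/IH [i [ir Pi Fi]]]; first by exists j; rewrite inE eqxx.
  by exists i; rewrite inE ir orbT.
- case/IH => i [ir Pi Fi]; by exists i; rewrite inE ir orbT.
Qed.

Lemma bigset_le (T : finType) (B : {set T}) F b :
  b \in B -> ole (\big[omin/None]_(x in B) F x) (F b).
Proof. move=> bB; apply: big_omin_le => //; by rewrite mem_index_enum. Qed.

Lemma bigset_Some (T : finType) (B : {set T}) F n :
  \big[omin/None]_(x in B) F x = Some n -> exists2 b, b \in B & F b = Some n.
Proof. by case/big_omin_Some => i [_ iB Fi]; exists i. Qed.

Section G.
Variables (T : finType) (e : rel T).

Lemma dist_reach (A : {set T}) x y n : dist e A x y = Some n -> reach e A n x y.
Proof.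
rewrite /dist. case: ifP => // mlt [<-].
have : has (fun n => reach e A n x y) (iota 0 #|T|) by rewrite has_find size_iota.
move/(nth_find 0). by rewrite nth_iota.
Qed.

Lemma reach_dist (A : {set T}) x y m : reach e A m x y -> m < #|T| ->
  exists2 n, dist e A x y = Some n & n <= m.
Proof.
move=> r mlt. rewrite /dist.
have hf : find (fun n => reach e A n x y) (iota 0 #|T|) <= m.
  rewrite leqNgt; apply/negP => /(before_find 0). by rewrite nth_iota // add0n r.
rewrite (leq_ltn_trans hf mlt). by eexists.
Qed.

Lemma reach1 (A : {set T}) x y : reach e A 1 x y -> [/\ x \in A, e x y & y \in A].
Proof. by move=> /existsP [z /and3P [/andP [xA /eqP <-] exy yA]]. Qed.

Lemma reach1I (A : {set T}) x y : x \in A -> e x y -> y \in A -> reach e A 1 x y.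
Proof. move=> xA exy yA; apply/existsP; exists x; by rewrite /= xA eqxx exy yA. Qed.

Lemma reach2 (A : {set T}) x y : reach e A 2 x y -> exists z, [/\ e x z, e z y, z \in A & y \in A].
Proof.
move=> /existsP [z /and3P [/reach1 [_ exz zA] ezy yA]]; by exists z.
Qed.

Lemma dGset0 x (B : {set T}) : dGset e x B = Some 0 -> x \in B.
Proof. by case/bigset_Some => b bB /dist_reach /= /andP [_ /eqP ->]. Qed.

Lemma dGset1 x (B : {set T}) w : 1 < #|T| -> w \in B -> e x w -> ole (dGset e x B) (Some 1).
Proof.
move=> hT wB exw; apply: ole_trans (bigset_le _ wB) _.
rewrite /dG; have [n -> /= //] := reach_dist (reach1I (in_setT x) exw (in_setT w)) hT.
Qed.

Variable V1 : {set T}.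
Local Notation W := (V2 V1).

Lemma inW x : (x \in W) = (x \notin V1).
Proof. by rewrite /V2 inE. Qed.

Lemma delta0 x y : delta e V1 x y = Some 0 -> x = y \/ (x \in W /\ y \in W).
Proof.
rewrite /delta; case: ifP => yW.
  by move/dGset0 => xW; right.
case: ifP => xW.
  by move/dGset0; rewrite yW.
case/omin_Some => [/dist_reach /= /andP [_ /eqP ->]|]; first by left.
case hx: (dGset e x W) => [a|] //; case hy: (dGset e y W) => [b|] //= [].
move/eqP; rewrite addn_eq0 => /andP [/eqP a0 _].
by move: hx; rewrite a0 => /dGset0; rewrite xW.
Qed.

Lemma delta1 x y n : x \in V1 -> delta e V1 x y = Some n -> n <= 1 ->
  x = y \/ exists w, e x w /\ (w = y \/ (w \in W /\ y \in W)).
Proof.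
move=> xV1; rewrite /delta; case: ifP => yW.
  case/bigset_Some => b bW /dist_reach.
  case: n => [|[|n]] //=.
  - by move=> /andP [_ /eqP xb]; move: bW; rewrite -xb inW xV1.
  - by move=> /reach1 [_ exb _] _; right; exists b; split => //; right.
case: ifP => xW; first by move: xW; rewrite inW xV1.
case/omin_Some.
  move/dist_reach; case: n => [|[|n]] //=.
  - by move=> /andP [_ /eqP ->]; left.
  - by move=> /reach1 [_ exy _] _; right; exists y; split => //; left.
case hx: (dGset e x W) => [a|] //; case hy: (dGset e y W) => [b|] //= [<-].
case: a hx => [/dGset0|a hx]; first by rewrite xW.
case: b hy => [/dGset0|b hy]; first by rewrite yW.
by rewrite addSn addnS.
Qed.

Lemma deltaV1adj x y : 1 < #|T| -> x \in V1 -> y \in V1 -> e x y ->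
  ole (delta e V1 x y) (Some 1).
Proof.
move=> hT xV1 yV1 exy; rewrite /delta inW yV1 /= inW xV1 /=.
apply: ole_trans (omin_le_l _ _) _.
by have [n -> /=] := reach_dist (reach1I xV1 exy yV1) hT.
Qed.

End G.

Lemma dset_eq (T : finType) (F : T -> option nat) (A : {set T}) n :
  (exists2 a, a \in A & ole (F a) (Some n)) -> (forall a, a \in A -> ole (Some n) (F a)) ->
  \big[omin/None]_(a in A) F a = Some n.
Proof.
move=> [a aA ha] hl.
have h1 := ole_trans (bigset_le F aA) ha.
have h2 := @bigset_Some _ A F.
move: h1 h2; case: (\big[omin/None]_(x in A) F x) => [m|] //= hm /(_ m erefl) [b bA Fb].
have := hl b bA; rewrite Fb /= => nm. by congr Some; apply/eqP; rewrite eqn_leq hm nm.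
Qed.

Section C.
Variables (T : finType) (e : rel T).
Hypothesis e_sym : symmetric e.
Hypothesis e_irr : irreflexive e.

Lemma nbrsE v (A : {set T}) : nbrs_in e v A = \sum_(y in A) (e v y : nat).
Proof.
rewrite /nbrs_in -sum1_card big_mkcond [RHS]big_mkcond; apply: eq_bigr => y _.
by rewrite inE; case: (y \in A); case: (e v y).
Qed.

Lemma edges2 (A B : {set T}) : #|edges_between e A B| = \sum_(a in A) nbrs_in e a B.
Proof.
under [RHS]eq_bigr do rewrite nbrsE.
rewrite pair_big /= -sum1_card big_mkcond [RHS]big_mkcond /=.
apply: eq_bigr => -[a b] _; rewrite /edges_between inE /=.
by case: (e a b); case: (a \in A); case: (b \in B).
Qed.

Lemma edges2' (A B : {set T}) : #|edges_between e A B| = \sum_(b in B) nbrs_in e b A.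
Proof.
rewrite edges2; under eq_bigr do rewrite nbrsE; under [RHS]eq_bigr do rewrite nbrsE.
rewrite exchange_big /=; apply: eq_bigr => b _; apply: eq_bigr => a _; by rewrite e_sym.
Qed.

Lemma nbrs_split v (A : {set T}) : deg e v = nbrs_in e v A + nbrs_in e v (~: A).
Proof.
rewrite /deg !nbrsE (bigID (mem A)) /=; congr (_ + _); apply: eq_bigl => y;
by rewrite !inE.
Qed.

Lemma nbrs_self v (A : {set T}) : v \in A -> (nbrs_in e v A).+1 <= #|A|.
Proof.
move=> vA; rewrite (cardsD1 v A) vA add1n ltnS /nbrs_in; apply: subset_leq_card.
apply/subsetP => y; rewrite !inE => /andP [yA evy]; rewrite yA andbT.
by apply/eqP => yv; move: evy; rewrite yv e_irr.
Qed.

Lemma nbrs_sub v (A B : {set T}) : A \subset B -> nbrs_in e v A <= nbrs_in e v B.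
Proof.
move=> /subsetP AB; apply: subset_leq_card; apply/subsetP => y; rewrite !inE.
by case/andP => /AB -> ->.
Qed.

Lemma nbrs_gt0 v (A : {set T}) a : a \in A -> e v a -> 0 < nbrs_in e v A.
Proof. move=> aA eva; apply/card_gt0P; exists a; by rewrite inE aA eva. Qed.

Lemma nbrs_0 v (A : {set T}) : (forall a, a \in A -> ~~ e v a) -> nbrs_in e v A = 0.
Proof.
move=> h; apply/eqP; rewrite cards_eq0; apply/eqP/setP => y; rewrite !inE.
by case yA: (y \in A) => //=; apply/negbTE/h.
Qed.

Lemma sum_ge_card (A : {set T}) (F : T -> nat) s : s \in A -> (forall t, t \in A -> 0 < F t) ->
  F s + #|A| <= \sum_(t in A) F t + 1.
Proof.
move=> sA h; rewrite -sum1_card (bigD1 s) //= (bigD1 s sA) /=.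
have : \sum_(t in A | t != s) 1 <= \sum_(t in A | t != s) F t.
  apply: leq_sum => t /andP [tA _]; exact: h.
move: (\sum_(t in A | t != s) 1) (\sum_(t in A | t != s) F t) => a b hab.
by rewrite add1n addnS addn1 ltnS leq_add2l.
Qed.

Lemma sum_ge_term (A : {set T}) (F : T -> nat) s : s \in A -> F s <= \sum_(t in A) F t.
Proof. by move=> sA; rewrite (bigD1 s) //= leq_addr. Qed.

Lemma sum_split (S V : {set T}) (F : T -> nat) : V2 V \subset S ->
  \sum_(t in S) F t = \sum_(t in S :&: V) F t + \sum_(t in V2 V) F t.
Proof.
move=> /subsetP sub; rewrite (bigID (mem V)) /=; congr (_ + _); apply: eq_bigl => y.
  by rewrite !inE.
rewrite /V2 !inE; case yV: (y \in V); rewrite ?andbF //= andbT.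
by apply: sub; rewrite /V2 inE yV.
Qed.

End C.

Unset Implicit Arguments.

Ltac slia := repeat match goal with
 | H : is_true (_ <= _) |- _ => apply (elimT leP) in H
 end; (try apply/leP); unfold addn, subn, muln in *; lia.

Theorem theorem1 (T : finType) (e : rel T)
  (e_sym : symmetric e) (e_irr : irreflexive e)
  (V1 : {set T}) (V1_ne : V1 != set0) (V2_ne : V2 V1 != set0)
  (diam : forall x y : T, exists2 n, delta e V1 x y = Some n & n <= 2)
  (S : {set T}) (S_ne : S != set0) (S_proper : S != setT)
  (V2_sub : V2 V1 \subset S)
  (k : nat) (k_attained : exists2 x, x \in V1 & deg e x = k)
  (k_min : forall x, x \in V1 -> k <= deg e x)
  (k_gt : #|edges_between e S (~: S)| < k) :
  [/\ exists2 sb, sb \in ~: S & delta_set e V1 sb S = Some 2,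
      forall s, s \in S -> delta_set e V1 s (~: S) = Some 1,
      [/\ #|S :&: V1| < #|edges_between e S (~: S)|,
          #|edges_between e S (~: S)| < k & k < #|~: S| ],
      S :&: V1 \subset boundary e V1 2 /\ interior e V1 2 \subset ~: S
    & Phi e V1 <= #|edges_between e S (~: S)| ].
Proof.
have SbV1 x : x \in ~: S -> x \in V1.
  rewrite inE => xS; apply/negPn/negP => xV.
  have := subsetP V2_sub x; rewrite inW xV => /(_ isT) xS'.
  by rewrite xS' in xS.
have hT : 1 < #|T|.
  case/set0Pn: V1_ne => a aV1; case/set0Pn: V2_ne => b bW.
  apply/card_gt1P; exists a, b; split => //.
  by apply/eqP => ab; move: bW; rewrite inW -ab aV1.
have [x0 x0Sb] : exists x0, x0 \in ~: S.
  case: (pickP (mem (~: S))) => [x h|h]; first by exists x.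
  have eS : S = setT.
    by apply/setP => x; move: (h x); rewrite /= !inE => /negbFE ->.
  by rewrite eS eqxx in S_proper.
have [sb [sbSb sbN]] : exists sb, sb \in ~: S /\ forall z, e sb z -> z \in ~: S.
  case: (pickP [pred x | (x \in ~: S) && [forall z, e x z ==> (z \in ~: S)]])
    => [sb /andP [h1 /forallP h2]| hno].
    exists sb; split => // z ez; exact: (implyP (h2 z) ez).
  exfalso.
  have hnb x : x \in ~: S -> 0 < nbrs_in e x S.
    move=> xSb; have := hno x; rewrite /= xSb /= => /negbT /forallPn [z].
    rewrite negb_imply => /andP [ez zS].
    apply: (nbrs_gt0 (a:=z)) => //. by move: zS; rewrite inE negbK.
  have hc : #|edges_between e S (~: S)| = \sum_(x in ~: S) nbrs_in e x S
    by rewrite (edges2' e_sym).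
  have hterm x : x \in ~: S -> k.+1 <= nbrs_in e x S + #|~: S|.
    move=> xSb; have := k_min x (SbV1 x xSb); rewrite (nbrs_split e x S) => hk.
    have := nbrs_self e_irr xSb. move=> hh1. slia.
  have hm1 : 0 < #|~: S| by apply/card_gt0P; exists x0.
  case: (leqP k #|~: S|) => hkm.
    have : #|~: S| <= #|edges_between e S (~: S)|.
      rewrite hc -sum1_card; apply: leq_sum => x hx; exact: hnb.
    move=> hh2; slia.
  have : #|~: S| * (k.+1 - #|~: S|) <= #|edges_between e S (~: S)|.
    rewrite hc -sum_nat_const; apply: leq_sum => x hx; have := hterm x hx.
    move=> hh2; slia.
  rewrite subSn ?(ltnW hkm) //.
  have kd : k = #|~: S| + (k - #|~: S|) by rewrite subnKC // ltnW.
  move: (k - #|~: S|) kd => d kd; rewrite mulnS => h.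
  have : d <= #|~: S| * d by rewrite leq_pmull.
  move=> h2; subst k; move: h k_gt h2; clear; move: (#|_|) (#|_|) => a b h1 h2 h3.
  slia.
have sbV1 := SbV1 sb sbSb.
have ksb : k < #|~: S|.
  have := k_min sb sbV1; rewrite (nbrs_split e sb S) (@nbrs_0 _ _ sb S).
    have := nbrs_self e_irr sbSb; move=> h1 h2; slia.
  by move=> a aS; apply/negP => /sbN; rewrite inE aS.
have lowS a : a \in S -> forall n, delta e V1 sb a = Some n -> 2 <= n.
  move=> aS n hd; rewrite leqNgt; apply/negP => hn.
  case: (delta1 sbV1 hd hn) => [sba| [w [ew [wa | [wW aW]]]]].
  - by move: sbSb; rewrite inE sba aS.
  - by move: (sbN w ew); rewrite inE wa aS.
  - by move: (sbN w ew); rewrite inE (subsetP V2_sub w wW).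
have claim1 : exists2 sb, sb \in ~: S & delta_set e V1 sb S = Some 2.
  exists sb => //; rewrite /delta_set; apply: dset_eq.
    case/set0Pn: S_ne => s0 s0S; have [n hn n2] := diam sb s0.
    by exists s0 => //; rewrite hn.
  move=> a aS; have [n hn _] := diam sb a; rewrite hn /=; exact: lowS a aS n hn.
have [v vW] := set0Pn _ V2_ne.
have hsbW : dGset e sb (V2 V1) = Some 2.
  have [n hn n2] := diam sb v.
  have n2' : n = 2 by apply/eqP; rewrite eqn_leq n2 (lowS v (subsetP V2_sub v vW) n hn).
  by move: hn; rewrite /delta vW n2'.
have [w0 [z0 [w0W z0Sb ew]]] : exists w z, [/\ w \in V2 V1, z \in ~: S & e w z].
  move: hsbW => /bigset_Some [w wW]; rewrite /dG => /dist_reach /reach2 [z [esz ezw _ _]].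
  exists w, z; split => //; [exact: sbN | by rewrite e_sym].
have nb s : s \in S -> s \in V1 -> exists2 a, a \in ~: S & e s a.
  move=> sS sV1. have [n hn n2] := diam s sb.
  case: (leqP n 1) => n1.
    case: (delta1 sV1 hn n1) => [ssb|[w [ew' [wsb|[_ sbW]]]]].
    - by move: sbSb; rewrite inE -ssb sS.
    - by exists sb => //; rewrite -wsb.
    - by move: sbW; rewrite inW sbV1.
  have n2' : n = 2 by apply/eqP; rewrite eqn_leq n2 n1.
  move: hn; rewrite /delta (inW V1 sb) sbV1 /= (inW V1 s) sV1 /= n2'.
  case/omin_Some => [/dist_reach /reach2 [z [esz ezsb zV1 _]] | ].
    by exists z => //; apply: sbN; rewrite e_sym.
  case hx: (dGset e s (V2 V1)) => [a|] //; rewrite hsbW /= => -[].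
  case: a hx => [/dGset0|a hx]; first by rewrite inW sV1.
  by rewrite addSn => -[]; rewrite addnC.
have claim2 : forall s, s \in S -> delta_set e V1 s (~: S) = Some 1.
  move=> s sS; rewrite /delta_set; apply: dset_eq.
    case sV1: (s \in V1).
      have [a aSb esa] := nb s sS sV1.
      by exists a => //; exact: deltaV1adj hT sV1 (SbV1 a aSb) esa.
    exists z0 => //. rewrite /delta (inW V1 z0) (SbV1 z0 z0Sb) /= (inW V1 s) sV1 /=.
    by apply: dGset1 hT w0W _; rewrite e_sym.
  move=> a aS'; have [n hn _] := diam s a; rewrite hn /=.
  case: n hn => // /delta0 [sa | [_ aW]].
    by move: aS'; rewrite inE -sa sS.
  by move: aS'; rewrite inE (subsetP V2_sub a aW).
have hc : #|edges_between e S (~: S)| = \sum_(t in S :&: V1) nbrs_in e t (~: S)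
   + \sum_(t in V2 V1) nbrs_in e t (~: S) by rewrite edges2 (sum_split _ V2_sub).
have hV2 : 0 < \sum_(t in V2 V1) nbrs_in e t (~: S).
  exact: leq_trans (nbrs_gt0 z0Sb ew) (sum_ge_term _ w0W).
have hpos t : t \in S :&: V1 -> 0 < nbrs_in e t (~: S).
  rewrite inE => /andP [tS tV1]; case: (nb t tS tV1) => a aSb eta; exact: nbrs_gt0 aSb eta.
have c3a : #|S :&: V1| < #|edges_between e S (~: S)|.
  have : \sum_(t in S :&: V1) 1 <= \sum_(t in S :&: V1) nbrs_in e t (~: S).
    by apply: leq_sum => t /hpos.
  rewrite sum1_card => h; slia.
have bd s : s \in S :&: V1 -> 2 <= nbrs_in e s (V2 V1).
  move=> sA; rewrite leqNgt; apply/negP => hlt.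
  move: (sA); rewrite inE => /andP [sS sV1].
  have h1 := k_min s sV1; rewrite (nbrs_split e s S) in h1.
  have h2 : nbrs_in e s S = nbrs_in e s (S :&: V1) + nbrs_in e s (V2 V1)
    by rewrite !nbrsE (sum_split _ V2_sub).
  have h3 := nbrs_self e_irr sA.
  have h4 := sum_ge_card sA hpos.
  slia.
have isub : interior e V1 2 \subset ~: S.
  apply/subsetP => x; rewrite inE => /andP [xV1 hx]; rewrite inE; apply/negP => xS.
  by have := bd x; rewrite inE xS xV1 => /(_ isT); rewrite leqNgt hx.
split => //.
  split => //; apply/subsetP => x xA; rewrite inE (bd x xA).
  by move: xA; rewrite inE => /andP [_ ->].
rewrite /Phi (bigID (mem S)) /=.
have e1 : \sum_(i in V1 | i \in S) minn (maxn 1 (nbrs_in e i (interior e V1 2)))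
            (nbrs_in e i (V2 V1)) <= \sum_(t in S :&: V1) nbrs_in e t (~: S).
  rewrite (eq_bigl (fun x => x \in S :&: V1)); last by move=> x; rewrite !inE andbC.
  apply: leq_sum => x xA.
  apply: leq_trans (geq_minl _ _) _; rewrite geq_max hpos //.
  exact: nbrs_sub.
have e2 : \sum_(i in V1 | i \notin S) minn (maxn 1 (nbrs_in e i (interior e V1 2)))
            (nbrs_in e i (V2 V1)) <= \sum_(x in ~: S) nbrs_in e x (V2 V1).
  rewrite (eq_bigl (fun x => x \in ~: S)); last first.
    move=> x; rewrite !inE; case xS: (x \in S); rewrite ?andbF //= andbT.
    by apply: SbV1; rewrite inE xS.
  by apply: leq_sum => x _; exact: geq_minr.
have e3 : \sum_(x in ~: S) nbrs_in e x (V2 V1) = \sum_(t in V2 V1) nbrs_in e t (~: S).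
  by rewrite -(edges2' e_sym) edges2.
rewrite e3 in e2; rewrite hc; exact: leq_add e1 e2.
Qed.
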